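(* $\chi_i'(S_{C_6}^n)=3$ for every positive integer $n$, where $C_6$ is the cycle on $6$ vertices.
   Context: For a graph $H$ with at least one edge, an injective edge $k$-coloring is a map $c:E(H)\to\{1,\dots,k\}$ such that whenever $e_1=xy$, $e_2=yz$, $e_3=zu$ are edges of $H$ with $x,y,z$ distinct and $u\notin\{y,z\}$ (the case $u=x$ being allowed), we have $c(e_1)\ne c(e_3)$. The injective chromatic index $\chi_i'(H)$ is the least $k$ for which such a coloring exists. For a graph $G$ and positive integer $n$, the generalized Sierpiński graph $S_G^n$ has vertex set $V(G)^n$, and $(u_1,\dots,u_n)$, $(v_1,\dots,v_n)$ are adjacent if and only if there is $d\in\{1,\dots,n\}$ with $u_i=v_i$ for $i<d$, $u_dv_d\in E(G)$, and $u_i=v_d$, $v_i=u_d$ for all $i>d$. *)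

(* Defs.v *)
From mathcomp Require Import all_boot.
Set Implicit Arguments. Unset Strict Implicit. Unset Printing Implicit Defensive.

(* A simple graph is a symmetric irreflexive boolean relation on a finType. *)

Definition C6 : rel 'I_6 :=
  fun i j => (val j == (val i).+1 %% 6) || (val i == (val j).+1 %% 6).

Definition sierpinski {T : finType} (G : rel T) (n : nat) : rel {ffun 'I_n -> T} :=
  fun u v => [exists d : 'I_n,
    [&& [forall i : 'I_n, (i < d) ==> (u i == v i)],
        G (u d) (v d) &
        [forall i : 'I_n, (d < i) ==> ((u i == v d) && (v i == u d))]]].

Arguments sierpinski {T} G n _ _.

(* An injective edge k-coloring of the graph H (edge relation adj): a color
   c x y in 'I_k (colors {0..k-1} instead of {1..k}) assigned to each edge,
   well defined on unordered edges (c x y = c y x), such that for every path-or-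
   triangle x-y-z-u with x,y,z distinct and u not in {y,z}, c(xy) <> c(zu). *)
Definition inj_edge_coloring {V : finType} (adj : rel V) (k : nat)
    (c : V -> V -> 'I_k) : Prop :=
  (forall x y, adj x y -> c x y = c y x) /\
  (forall x y z u, adj x y -> adj y z -> adj z u ->
     x != y -> y != z -> x != z -> u != y -> u != z ->
     c x y <> c z u).

Definition inj_edge_colorable {V : finType} (adj : rel V) (k : nat) : Prop :=
  exists c : V -> V -> 'I_k, inj_edge_coloring adj c.

Definition inj_chromatic_index_is {V : finType} (adj : rel V) (k : nat) : Prop :=
  inj_edge_colorable adj k /\ forall k', k' < k -> ~ inj_edge_colorable adj k'.

(* Main.v *)
Require Import Defs.
From mathcomp Require Import all_boot.
From mathcomp Require Import zify.
Set Implicit Arguments. Unset Strict Implicit. Unset Printing Implicit Defensive.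

Definition C6n (a b : nat) : bool := (b == a.+1 %% 6) || (a == b.+1 %% 6).
Definition lab (a b : nat) : nat := if b == a.+1 %% 6 then a else b.
Definition ctab : seq (seq nat) := [:: [::0;2;2;1;1;0]; [::1;2;2;0;0;1]; [::1;0;0;2;2;1];
  [::0;1;1;2;2;0]; [::2;1;1;0;0;2]; [::2;0;0;1;1;2]].
Definition colN t a b := nth 0 (nth [::] ctab t) (lab a b) %% 3.
Definition betaN (r : bool) a b := if r then (1 + odd (lab a b)) %% 3 else 0.
Definition allN (P : nat -> bool) := all P (iota 0 6).
Lemma allNP P : allN P -> forall a, a < 6 -> P a.
Proof. by move=> /allP H a Ha; apply: H; rewrite mem_iota. Qed.

Definition K1b := allN (fun t => allN (fun a => allN (fun b => allN (fun c => allN (fun d =>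
  C6n a b ==> C6n b c ==> C6n c d ==> (a != c) ==> (d != b) ==> (colN t a b != colN t c d)))))).
Lemma K1bT : K1b. Proof. by vm_compute. Qed.
Definition K2b := allN (fun a => allN (fun b => allN (fun x => allN (fun u =>
  C6n a b ==> C6n x b ==> C6n a u ==> (colN b x b != colN a a u) && (colN a x b != colN b a u))))).
Lemma K2bT : K2b. Proof. by vm_compute. Qed.
Definition K3b := allN (fun a => allN (fun b => allN (fun z => allN (fun u =>
  C6n b a ==> C6n b z ==> C6n z u ==> (u != b) ==>
  (betaN true b a != colN a z u) && (betaN false b a != colN b z u))))).
Lemma K3bT : K3b. Proof. by vm_compute. Qed.
Definition K5b := allN (fun a => allN (fun b => allN (fun c =>
  C6n a b ==> C6n a c ==> C6n b c ==> false))).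
Lemma K5bT : K5b. Proof. by vm_compute. Qed.
Definition Ksb := allN (fun t => allN (fun a => allN (fun b =>
  C6n a b ==> (colN t a b == colN t b a) && (betaN true a b == betaN true b a)))).
Lemma KsbT : Ksb. Proof. by vm_compute. Qed.
Definition Kib := allN (fun a => ~~ C6n a a).
Lemma KibT : Kib. Proof. by vm_compute. Qed.

Lemma K1 t a b c d : t < 6 -> a < 6 -> b < 6 -> c < 6 -> d < 6 ->
  C6n a b -> C6n b c -> C6n c d -> a != c -> d != b -> colN t a b != colN t c d.
Proof.
move=> ht ha hb hc hd; move: (allNP (allNP (allNP (allNP (allNP K1bT ht) ha) hb) hc) hd).
by move=> /implyP H /H /implyP H' /H' /implyP H'' /H'' /implyP G /G /implyP G' /G'.
Qed.
Lemma K2 a b x u : a < 6 -> b < 6 -> x < 6 -> u < 6 ->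
  C6n a b -> C6n x b -> C6n a u -> (colN b x b != colN a a u) && (colN a x b != colN b a u).
Proof.
move=> ha hb hx hu; move: (allNP (allNP (allNP (allNP K2bT ha) hb) hx) hu).
by move=> /implyP H /H /implyP H' /H' /implyP H''.
Qed.
Lemma K3 a b z u : a < 6 -> b < 6 -> z < 6 -> u < 6 ->
  C6n b a -> C6n b z -> C6n z u -> u != b ->
  (betaN true b a != colN a z u) && (betaN false b a != colN b z u).
Proof.
move=> ha hb hz hu; move: (allNP (allNP (allNP (allNP K3bT ha) hb) hz) hu).
by move=> /implyP H /H /implyP H' /H' /implyP H'' /H'' /implyP G /G.
Qed.
Lemma K5 a b c : a < 6 -> b < 6 -> c < 6 -> C6n a b -> C6n a c -> C6n b c -> False.
Proof.
move=> ha hb hc; move: (allNP (allNP (allNP K5bT ha) hb) hc).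
by move=> /implyP H /H /implyP H' /H' /implyP H'' /H''.
Qed.
Lemma Ks t a b : t < 6 -> a < 6 -> b < 6 -> C6n a b ->
  colN t a b = colN t b a /\ betaN true a b = betaN true b a.
Proof.
move=> ht ha hb; move: (allNP (allNP (allNP KsbT ht) ha) hb).
by move=> /implyP H /H /andP[/eqP -> /eqP ->].
Qed.
Lemma C6nC a b : C6n a b = C6n b a.
Proof. by rewrite /C6n orbC. Qed.

Definition lev m (x y : {ffun 'I_m.+1 -> 'I_6}) (d : 'I_m.+1) : bool :=
  [&& [forall i : 'I_m.+1, (i < d) ==> (x i == y i)], C6 (x d) (y d) &
      [forall i : 'I_m.+1, (d < i) ==> ((x i == y d) && (y i == x d))]].

Section S.
Variable m : nat.
Implicit Types x y z u : {ffun 'I_m.+1 -> 'I_6}.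

Lemma C6irr (a : 'I_6) : C6 a a = false.
Proof. by apply/negbTE; apply: (allNP KibT (ltn_ord a)). Qed.

Lemma lev_pre x y d (i : 'I_m.+1) : lev x y d -> i < d -> x i = y i.
Proof. by case/and3P=> /forallP/(_ i)/implyP H _ _ /H/eqP. Qed.
Lemma lev_C6 x y d : lev x y d -> C6 (x d) (y d).
Proof. by case/and3P. Qed.
Lemma lev_post1 x y d (i : 'I_m.+1) : lev x y d -> d < i -> x i = y d.
Proof. by case/and3P=> _ _ /forallP/(_ i)/implyP H /H/andP[/eqP]. Qed.
Lemma lev_post2 x y d (i : 'I_m.+1) : lev x y d -> d < i -> y i = x d.
Proof. by case/and3P=> _ _ /forallP/(_ i)/implyP H /H/andP[_ /eqP]. Qed.

Lemma lev_sym x y d : lev x y d = lev y x d.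
Proof.
rewrite /lev; congr [&& _, _ & _].
- by apply: eq_forallb => i; rewrite eq_sym.
- by rewrite /C6 orbC.
- by apply: eq_forallb => i; rewrite andbC.
Qed.

Lemma lev_uniq x y d d' : lev x y d -> lev x y d' -> d = d'.
Proof.
move=> H H'; case: (ltngtP d d') => [lt|lt|/val_inj //].
- by move: (lev_C6 H); rewrite (lev_pre H' lt) C6irr.
- by move: (lev_C6 H'); rewrite (lev_pre H lt) C6irr.
Qed.

Definition pen : 'I_m.+1 := inord m.-1.
Lemma penE : (pen : nat) = m.-1.
Proof. by rewrite inordK //; lia. Qed.

Definition tc x : nat := if m == 0 then 0 else val (x pen).
Definition colAt x y (d : 'I_m.+1) : nat :=
  if val d == m then colN (tc x) (x d) (y d) else betaN (m - d == 1) (x d) (y d).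


Definition c3 (k : nat) : 'I_3 := Ordinal (ltn_pmod k (isT : 0 < 3)).
Definition col x y : 'I_3 :=
  c3 (if [pick d | lev x y d] is Some d then colAt x y d else 0).

Lemma colAt_lt x y d : colAt x y d < 3.
Proof.
rewrite /colAt /colN /betaN; case: ifP => _; first exact: ltn_pmod.
by case: ifP => _ //; exact: ltn_pmod.
Qed.

Lemma col_lev x y d : lev x y d -> nat_of_ord (col x y) = colAt x y d.
Proof.
move=> H; rewrite /col /=; case: pickP => [d' H'|H']; last by rewrite H' in H.
by rewrite (lev_uniq H' H) modn_small // colAt_lt.
Qed.

Lemma ordmaxP (d : 'I_m.+1) : d < m \/ d = ord_max.
Proof.
have := ltn_ord d; case: (ltnP d m) => H H'; [by left | right; apply: val_inj => /=; lia].
Qed.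

Lemma penP (d : 'I_m.+1) : d < m -> d = pen \/ d < pen.
Proof.
move=> H; have := penE; case: (ltngtP d pen) => [lt|gt|eq] E; [by right | lia | left; exact: val_inj].
Qed.

Lemma pen_lt : m != 0 -> pen < (ord_max : 'I_m.+1).
Proof. by rewrite penE /=; lia. Qed.

Lemma tc_lt x : tc x < 6.
Proof. by rewrite /tc; case: ifP => _ //; exact: ltn_ord. Qed.

Lemma cyc_pen x y : lev x y ord_max -> tc x = tc y.
Proof.
move=> H; rewrite /tc; case: (m =P 0) => // /eqP m0.
by rewrite (lev_pre H (pen_lt m0)).
Qed.

Lemma colAt_sym x y d : lev x y d -> colAt x y d = colAt y x d.
Proof.
move=> H; have C := lev_C6 H; rewrite /colAt; case: eqP => Hd.
- have Ed : d = ord_max by apply: val_inj; rewrite /= Hd.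
  have H0 : lev x y ord_max by rewrite -Ed. rewrite (cyc_pen H0).
  by case: (Ks (tc_lt y) (ltn_ord (x d)) (ltn_ord (y d)) C).
- case: (_ == 1) => //.
  by case: (Ks (isT : 0 < 6) (ltn_ord (x d)) (ltn_ord (y d)) C).
Qed.

Lemma col_sym x y d : lev x y d -> col x y = col y x.
Proof.
move=> H; have H' : lev y x d by rewrite lev_sym.
apply: ord_inj; have E1 := col_lev H; have E2 := col_lev H'.
by rewrite E1 E2 (colAt_sym H).
Qed.


Lemma lt_max (d : 'I_m.+1) : d < m -> d < (ord_max : 'I_m.+1).
Proof. by []. Qed.

Lemma bridge_uniq x y z d1 d2 : lev x y d1 -> lev y z d2 -> d1 < m -> d2 < m -> x = z.
Proof.
move=> H1 H2 h1 h2; case: (ltngtP d1 d2) => [lt|lt|eq].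
- have E1 := lev_post2 H1 lt; have E2 := lev_post2 H1 (lt_max h1).
  have E3 := lev_post1 H2 (lt_max h2).
  by move: (lev_C6 H2); rewrite E1 -E2 E3 C6irr.
- have E1 := lev_post1 H2 lt; have E2 := lev_post1 H2 (lt_max h2).
  have E3 := lev_post2 H1 (lt_max h1).
  by move: (lev_C6 H1); rewrite E1 -E2 E3 C6irr.
- have Ed : d1 = d2 by apply: val_inj.
  subst d2; apply/ffunP => i; case: (ltngtP i d1) => [lt|lt|eq'].
  + by rewrite (lev_pre H1 lt) (lev_pre H2 lt).
  + by rewrite (lev_post1 H1 lt) (lev_post2 H2 lt).
  + have -> : i = d1 by apply: val_inj.
    by rewrite -(lev_post2 H1 (lt_max h1)) (lev_post1 H2 (lt_max h2)).
Qed.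

Lemma cyc_eq x y z : lev x y ord_max -> lev y z ord_max -> x ord_max = z ord_max -> x = z.
Proof.
move=> H1 H2 E; apply/ffunP => i; case: (ordmaxP i) => [Hi|->//].
by rewrite (lev_pre H1 (lt_max Hi)) (lev_pre H2 (lt_max Hi)).
Qed.

Lemma caseB2 x y z u d1 : lev x y d1 -> lev y z ord_max -> lev z u ord_max -> d1 < m ->
  u != y -> colAt x y d1 != colAt z u ord_max.
Proof.
move=> H1 H2 H3 Hd1 uy.
have m0 : m != 0 by lia.
have yl := lev_post2 H1 (lt_max Hd1).
have zp : z pen = y pen by rewrite (lev_pre H2 (pen_lt m0)).
have uyl : u ord_max != y ord_max.
  apply: contra uy => /eqP E; apply/eqP; apply: (cyc_eq (y := z)); [by rewrite lev_sym | by rewrite lev_sym | exact: E].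
have C1 := lev_C6 H1; have C2 := lev_C6 H2; have C3 := lev_C6 H3.
rewrite yl in C2 uyl.
rewrite /colAt /= eqxx (_ : (d1 == m :> nat) = false); last by apply/negbTE; lia.
rewrite /tc (negbTE m0) zp.
case: (penP Hd1) => E.
- have -> : (m - d1 == 1) = true by apply/eqP; move: (penE); rewrite -E; lia.
  rewrite -E.
  by case/andP: (K3 (ltn_ord (y d1)) (ltn_ord (x d1)) (ltn_ord (z ord_max)) (ltn_ord (u ord_max)) C1 C2 C3 uyl).
- have -> : (m - d1 == 1) = false by apply/negbTE; move: (penE) E; lia.
  rewrite (lev_post2 H1 E).
  by case/andP: (K3 (ltn_ord (y d1)) (ltn_ord (x d1)) (ltn_ord (z ord_max)) (ltn_ord (u ord_max)) C1 C2 C3 uyl).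
Qed.


Lemma betaTF a b a' b' : betaN false a b != betaN true a' b'.
Proof. by rewrite /betaN; case: (odd _). Qed.

Lemma mainc x y z u d1 d2 d3 : lev x y d1 -> lev y z d2 -> lev z u d3 ->
  x != z -> u != y -> colAt x y d1 != colAt z u d3.
Proof.
move=> H1 H2 H3 xz uy.
case: (ordmaxP d2) => [Hd2|Ed2].
- have E1 : d1 = ord_max.
    case: (ordmaxP d1) => // Hd1; by rewrite (bridge_uniq H1 H2 Hd1 Hd2) eqxx in xz.
  have E3 : d3 = ord_max.
    case: (ordmaxP d3) => // Hd3; by rewrite (bridge_uniq H2 H3 Hd2 Hd3) eqxx in uy.
  subst d1 d3.
  have m0 : m != 0 by lia.
  have yl := lev_post1 H2 (lt_max Hd2); have zl := lev_post2 H2 (lt_max Hd2).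
  have C1 := lev_C6 H1; have C2 := lev_C6 H2; have C3 := lev_C6 H3.
  rewrite yl in C1; rewrite zl in C3.
  rewrite /colAt /= eqxx (cyc_pen H1) /tc (negbTE m0) yl zl.
  have K := K2 (ltn_ord (y d2)) (ltn_ord (z d2)) (ltn_ord (x ord_max)) (ltn_ord (u ord_max)) C2 C1 C3.
  case: (penP Hd2) => E.
  + by rewrite -E; case/andP: K.
  + by rewrite (lev_post1 H2 E) (lev_post2 H2 E); case/andP: K.
- subst d2.
  case: (ordmaxP d1) => [Hd1|?]; case: (ordmaxP d3) => [Hd3|?]; subst.
  +
    have m0 : m != 0 by lia.
    have yl := lev_post2 H1 (lt_max Hd1); have zl := lev_post1 H3 (lt_max Hd3).
    have zp : z pen = y pen by rewrite (lev_pre H2 (pen_lt m0)).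
    have C1 := lev_C6 H1; have C2 := lev_C6 H2; have C3 := lev_C6 H3.
    rewrite /colAt (_ : (d1 == m :> nat) = false); last by apply/negbTE; lia.
    rewrite (_ : (d3 == m :> nat) = false); last by apply/negbTE; lia.
    case: (penP Hd1) => E1; case: (penP Hd3) => E3.
    * exfalso; subst d1 d3.
      apply: (K5 (ltn_ord (y pen)) (ltn_ord (y ord_max)) (ltn_ord (z ord_max))).
      - by rewrite yl C6nC.
      - by rewrite zl -zp.
      - exact: C2.
    * have -> : (m - d1 == 1) = true by apply/eqP; move: (penE); rewrite -E1; lia.
      have -> : (m - d3 == 1) = false by apply/negbTE; move: (penE) E3; lia.
      by rewrite eq_sym betaTF.
    * have -> : (m - d1 == 1) = false by apply/negbTE; move: (penE) E1; lia.
      have -> : (m - d3 == 1) = true by apply/eqP; move: (penE); rewrite -E3; lia.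
      exact: betaTF.
    * exfalso; move: C2.
      by rewrite yl -(lev_post2 H1 E1) zl -(lev_post1 H3 E3) zp C6irr.
  + exact: caseB2 H1 H2 H3 Hd1 uy.
  + have H1' : lev y x ord_max by rewrite lev_sym.
    have H2' : lev z y ord_max by rewrite lev_sym.
    have H3' : lev u z d3 by rewrite lev_sym.
    rewrite (colAt_sym H1) (colAt_sym H3) eq_sym.
    exact: caseB2 H3' H2' H1' Hd3 xz.
  + have C1 := lev_C6 H1; have C2 := lev_C6 H2; have C3 := lev_C6 H3.
    rewrite /colAt /= eqxx (cyc_pen H1) (cyc_pen H2).
    apply: K1 => //; first exact: tc_lt.
    * apply: contra xz => /eqP E; apply/eqP; exact: cyc_eq H1 H2 (val_inj E).
    * apply: contra uy => /eqP E; apply/eqP; apply: (cyc_eq (y := z));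
        [by rewrite lev_sym | by rewrite lev_sym | exact: (val_inj E)].
Qed.

End S.

Definition wv m (j : 'I_6) : {ffun 'I_m.+1 -> 'I_6} :=
  [ffun i => if i == ord_max then j else ord0].

Lemma wv_adj m (j j' : 'I_6) : C6 j j' -> sierpinski C6 m.+1 (wv m j) (wv m j').
Proof.
move=> C; apply/existsP; exists ord_max; apply/and3P; split.
- apply/forallP => i; apply/implyP => Hi; rewrite !ffunE (_ : (i == ord_max) = false) //.
  by apply/negbTE; apply: contraTneq Hi => ->; rewrite ltnn.
- by rewrite !ffunE eqxx.
- by apply/forallP => i; apply/implyP; rewrite ltnNge leq_ord.
Qed.

Lemma wv_neq m (j j' : 'I_6) : j != j' -> wv m j != wv m j'.
Proof.
apply: contra => /eqP E; have := congr1 (fun f : {ffun 'I_m.+1 -> 'I_6} => f ord_max) E.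
by rewrite /= !ffunE eqxx => ->.
Qed.

Theorem mainTheorem9 (n : nat) : 0 < n ->
  inj_chromatic_index_is (sierpinski C6 n) 3.
Proof.
case: n => // m _; split.
- exists (@col m); split.
  + by move=> x y /existsP [d H]; exact: col_sym H.
  + move=> x y z u /existsP[d1 H1] /existsP[d2 H2] /existsP[d3 H3] _ _ xz uy _ E.
    have := mainc H1 H2 H3 xz uy.
    by rewrite -(col_lev H1) -(col_lev H3) E eqxx.
- move=> k hk [c [_ Cinj]].
  pose o0 := Ordinal (isT : 0 < 6); pose o1 := Ordinal (isT : 1 < 6);
  pose o2 := Ordinal (isT : 2 < 6); pose o3 := Ordinal (isT : 3 < 6);
  pose o4 := Ordinal (isT : 4 < 6); pose o5 := Ordinal (isT : 5 < 6).
  have A := fun j j' (C : C6 j j') => wv_adj m C.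
  have N := fun j j' (C : j != j') => wv_neq m C.
  have X1 := Cinj _ _ _ _ (A o0 o1 isT) (A o1 o2 isT) (A o2 o3 isT)
     (N o0 o1 isT) (N o1 o2 isT) (N o0 o2 isT) (N o3 o1 isT) (N o3 o2 isT).
  have X2 := Cinj _ _ _ _ (A o2 o3 isT) (A o3 o4 isT) (A o4 o5 isT)
     (N o2 o3 isT) (N o3 o4 isT) (N o2 o4 isT) (N o5 o3 isT) (N o5 o4 isT).
  have X3 := Cinj _ _ _ _ (A o4 o5 isT) (A o5 o0 isT) (A o0 o1 isT)
     (N o4 o5 isT) (N o5 o0 isT) (N o4 o0 isT) (N o1 o5 isT) (N o1 o0 isT).
  have Y1 : nat_of_ord (c (wv m o0) (wv m o1)) <> c (wv m o2) (wv m o3) by move/val_inj.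
  have Y2 : nat_of_ord (c (wv m o2) (wv m o3)) <> c (wv m o4) (wv m o5) by move/val_inj.
  have Y3 : nat_of_ord (c (wv m o4) (wv m o5)) <> c (wv m o0) (wv m o1) by move/val_inj.
  have L1 := ltn_ord (c (wv m o0) (wv m o1)).
  have L2 := ltn_ord (c (wv m o2) (wv m o3)).
  have L3 := ltn_ord (c (wv m o4) (wv m o5)).
  lia.
Qed.
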